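(* Let $G$ be a finite group with $|G|\ge3$ and let $\mathcal C=\mathcal C(\mathcal B(G),\mathcal F(G))$. Then (1) $\mathsf D(G)\le\omega(G)\le\mathsf D(G)+\mathsf d(\mathcal C)$; (2) $\mathsf D(G/G')\le\mathsf D(\mathcal C)$, with equality if $G$ is abelian.
   Context: For a finite group $G$ (multiplicative, identity $1_G$, commutator subgroup $G'$), $\mathcal F(G)$ is the free abelian monoid with basis $G$ (sequences $S=g_1\boldsymbol{\cdot}\ldots\boldsymbol{\cdot}g_\ell$, operation $\boldsymbol{\cdot}$, length $|S|=\ell$). $\pi(S)=\{g_{\tau(1)}\cdots g_{\tau(\ell)}:\tau\text{ a permutation of }[1,\ell]\}$, $\pi$ of the empty sequence is $\{1_G\}$, $\mathcal B(G)=\{S\in\mathcal F(G):1_G\in\pi(S)\}$, $\mathcal A(G)$ its set of atoms, and $\mathsf D(G)=\max\{|U|:U\in\mathcal A(G)\}$ (applied to the group $G/G'$ this defines $\mathsf D(G/G')$). For $S,S'\in\mathcal F(G)$, $S\sim S'$ means: for all $T\in\mathcal F(G)$, $S\boldsymbol{\cdot}T\in\mathcal B(G)\iff S'\boldsymbol{\cdot}T\in\mathcal B(G)$; the classes form the class semigroup $\mathcal C(\mathcal B(G),\mathcal F(G))$, written additively with $[S]+[T]=[S\boldsymbol{\cdot}T]$. For an atomic monoid $H$ and $b\in H$, $\omega(H,b)$ is the smallest $N\in\mathbb N_0\cup\{\infty\}$ such that whenever $b\mid a_1\cdots a_n$ in $H$ ($a_i\in H$) there is $\Omega\subset[1,n]$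 with $|\Omega|\le N$ and $b\mid\prod_{\nu\in\Omega}a_\nu$ in $H$; $\omega(H)=\sup\{\omega(H,u):u\in\mathcal A(H)\}$ and $\omega(G)=\omega(\mathcal B(G))$. For an additive commutative semigroup $\mathcal C$ with zero (empty sums equal $0$): $\mathsf d(\mathcal C)$ is the smallest $d\in\mathbb N_0\cup\{\infty\}$ such that for all $c_1,\dots,c_n\in\mathcal C$ there is $\Omega\subset[1,n]$, $|\Omega|\le d$, with $\sum_{\nu=1}^n c_\nu=\sum_{\nu\in\Omega}c_\nu$; $\mathsf D(\mathcal C)$ is the smallest $\ell\in\mathbb N\cup\{\infty\}$ such that for all $n\ge\ell$ and $c_1,\dots,c_n\in\mathcal C$ there is $\Omega\subsetneq[1,n]$ with $\sum_{\nu=1}^n c_\nu=\sum_{\nu\in\Omega}c_\nu$. *)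

(* Defs.v *)
From HB Require Import structures.
From mathcomp Require Import all_boot all_fingroup.
From Stdlib Require Import ClassicalEpsilon.
Set Implicit Arguments. Unset Strict Implicit. Unset Printing Implicit Defensive.

(* Extended naturals N_0 ∪ {∞}: [None] is ∞. *)
Definition enat := option nat.

Definition le_enat (a b : enat) : Prop :=
  match a, b with
  | _, None => True
  | None, Some _ => False
  | Some m, Some n => (m <= n)%N
  end.

Definition add_enat (a b : enat) : enat :=
  match a, b with
  | Some m, Some n => Some (m + n)%N
  | _, _ => None
  end.

Definition infN (P : nat -> Prop) : enat :=
  if excluded_middle_informative (exists n, P n)
  then Some (epsilon (inhabits 0%N) (fun n => P n /\ forall m, P m -> (n <= m)%N))
  else None.

Section Seqs.
Variable gT : finGroupType.
Local Open Scope group_scope.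

(* Elements of F(G) are represented by lists, considered up to permutation
   (perm_eq); [++] is the monoid operation, [size] the length. *)

(* S ∈ B(G): 1 ∈ π(S) *)
Definition inB (S : seq gT) : Prop :=
  exists2 t : seq gT, perm_eq t S & \prod_(x <- t) x = 1.

(* atoms of the monoid B(G) (its only unit is the empty sequence) *)
Definition atomB (U : seq gT) : Prop :=
  [/\ inB U, U <> [::] &
      forall V W, inB V -> inB W -> perm_eq U (V ++ W) -> V = [::] \/ W = [::]].

Definition Davenport : enat :=
  infN (fun n => forall U, atomB U -> (size U <= n)%N).

Definition dvdB (b a : seq gT) : Prop :=
  exists2 c, inB c & perm_eq a (b ++ c).

Definition catall n (S : 'I_n -> seq gT) (A : {set 'I_n}) : seq gT :=
  flatten [seq S i | i <- enum A].

Definition omega_elt (b : seq gT) : enat :=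
  infN (fun N => forall n (a : 'I_n -> seq gT),
          (forall i, inB (a i)) -> dvdB b (catall a setT) ->
          exists Om : {set 'I_n}, (#|Om| <= N)%N /\ dvdB b (catall a Om)).

Definition omegaG : enat :=
  infN (fun N => forall u, atomB u -> le_enat (omega_elt u) (Some N)).

(* S ~ S' : the congruence defining the class semigroup C(B(G), F(G)) *)
Definition simB (S S' : seq gT) : Prop :=
  forall T, inB (S ++ T) <-> inB (S' ++ T).

(* Elements of C are classes [S_i]; [S]+[T] = [S ++ T]; equality is simB.
   small d(C): *)
Definition small_d_C : enat :=
  infN (fun d => forall n (S : 'I_n -> seq gT),
          exists Om : {set 'I_n}, (#|Om| <= d)%N /\ simB (catall S setT) (catall S Om)).

Definition big_D_C : enat :=
  infN (fun l => (1 <= l)%N /\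
          forall n, (l <= n)%N -> forall S : 'I_n -> seq gT,
          exists2 Om : {set 'I_n}, Om \proper setT & simB (catall S setT) (catall S Om)).
End Seqs.

(* Main.v *)
Require Import Defs.
From HB Require Import structures.
From mathcomp Require Import all_boot all_fingroup.
From mathcomp Require Import all_solvable.
From mathcomp Require Import zify.
From Stdlib Require Import Classical ClassicalEpsilon.
Set Implicit Arguments. Unset Strict Implicit. Unset Printing Implicit Defensive.

Lemma least_ex (P : nat -> Prop) n : P n -> exists k, P k /\ forall m, P m -> (k <= m)%N.
Proof.
elim/ltn_ind: n => n IH Pn.
case: (classic (exists m, (m < n)%N /\ P m)) => [[m [lt Pm]]|H]; first exact: IH Pm.
exists n; split=> // m Pm; rewrite leqNgt; apply/negP => lt; apply: H; by exists m.
Qed.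

Lemma infN_some (P : nat -> Prop) n : P n -> exists m, infN P = Some m /\ (m <= n)%N /\ P m.
Proof.
move=> Pn.
have [h1 h2] := epsilon_spec (inhabits 0) (fun n => P n /\ forall m, P m -> (n <= m)%N) (least_ex Pn).
rewrite /infN; case: excluded_middle_informative => [e|nex]; last by exfalso; apply: nex; exists n.
eexists; split; first reflexivity. split; [exact: h2 | exact: h1].
Qed.

Lemma infN_spec (P : nat -> Prop) m : infN P = Some m -> P m.
Proof.
rewrite /infN; case: excluded_middle_informative => [[n Pn]|] // [<-].
by have [] := epsilon_spec (inhabits 0) (fun n => P n /\ forall m, P m -> (n <= m)%N) (least_ex Pn).
Qed.

Section Gen.
Variable gT : finGroupType.
Local Open Scope group_scope.
Implicit Types (S T U V W : seq gT).

Lemma count_catall n (a : 'I_n -> seq gT) (A : {set 'I_n}) (p : pred gT) :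
  count p (catall a A) = (\sum_(i in A) count p (a i))%N.
Proof. by rewrite /catall count_flatten sumnE !big_map big_enum. Qed.

Lemma size_catall n (a : 'I_n -> seq gT) (A : {set 'I_n}) :
  size (catall a A) = (\sum_(i in A) size (a i))%N.
Proof. rewrite -count_predT count_catall; apply: eq_bigr => i _; by rewrite count_predT. Qed.

Lemma count_split n (a : 'I_n -> seq gT) (A : {set 'I_n}) (p : pred gT) :
  count p (catall a setT) = (count p (catall a A) + count p (catall a (~: A)))%N.
Proof. by rewrite !count_catall (big_setID A) /= setTI setTD. Qed.

Lemma catall_nth U : catall (fun i : 'I_(size U) => [:: nth 1 U i]) setT = U.
Proof.
rewrite /catall enum_setT -enumT flatten_map1.
rewrite (map_comp (nth 1 U) val) val_enum_ord -/(mkseq _ _); exact: mkseq_nth.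
Qed.

Lemma inB_perm S S' : perm_eq S S' -> inB S -> inB S'.
Proof. move=> pSS' [t pt Pt]; exists t => //; exact: perm_trans pt pSS'. Qed.
Lemma inB_nil : inB ([::] : seq gT). Proof. by exists [::]; rewrite ?big_nil. Qed.
Lemma inB_cat S T : inB S -> inB T -> inB (S ++ T).
Proof.
move=> [t pt Pt] [t' pt' Pt']; exists (t ++ t'); first by rewrite perm_cat.
by rewrite big_cat /= Pt Pt' mulg1.
Qed.
Lemma prod_rev_inv (t : seq gT) : \prod_(x <- rev (map (fun z : gT => z^-1) t)) x = (\prod_(x <- t) x)^-1.
Proof.
elim: t => [|x t IH]; first by rewrite big_nil invg1.
by rewrite /= rev_cons big_rcons IH big_cons invMg.
Qed.
Lemma inB_inv S : inB S -> inB (map (fun z : gT => z^-1) S).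
Proof.
move=> [t pt Pt]; exists (rev (map (fun z : gT => z^-1) t)); first by rewrite perm_rev; apply: perm_map.
by rewrite prod_rev_inv Pt invg1.
Qed.
Lemma inB_pair (x : gT) : inB [:: x; x^-1].
Proof. by exists [:: x; x^-1]; rewrite // !big_cons big_nil mulg1 mulgV. Qed.
Lemma inB_catall n (a : 'I_n -> seq gT) A : (forall i, inB (a i)) -> inB (catall a A).
Proof. move=> h; rewrite /catall; elim: (enum A) => [|i r IH] /=; [exact: inB_nil | exact: inB_cat]. Qed.
Lemma inB1 (v : gT) : inB [:: v] -> v = 1.
Proof.
move=> [t pt Pt]; have := perm_size pt; case: t pt Pt => [|w [|? ?]] //= pt Pt _.
have : w \in [:: v] by rewrite -(perm_mem pt) mem_seq1.
by rewrite mem_seq1 => /eqP <-; rewrite big_seq1 in Pt.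
Qed.

Lemma not_atom S : inB S -> S <> [::] -> ~ atomB S ->
  exists V W, [/\ inB V, inB W, perm_eq S (V ++ W), V <> [::] & W <> [::]].
Proof.
move=> hS hne hna; apply: NNPP => H; apply: hna; split=> // V W hV hW hp.
apply: NNPP => H2; apply: H; exists V, W; split=> //; [move=> e|move=> e]; apply: H2; by [left|right].
Qed.

Lemma atom3 : (3 <= #|[set: gT]|)%N -> exists U, atomB U /\ size U = 3.
Proof.
move=> h3.
have [x hx] : exists x : gT, x != 1.
  apply: NNPP => H; have: [set: gT] \subset [set 1].
    apply/subsetP => z _; rewrite inE; apply/negPn/negP => hz; apply: H; by exists z.
  move/subset_leq_card; rewrite cards1; lia.
have [y hy] : exists y : gT, (y != 1) && (y != x^-1).
  apply: NNPP => H; have: [set: gT] \subset [set 1; x^-1].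
    apply/subsetP => z _; rewrite !inE; apply/negPn/negP => hz; apply: H; exists z.
    by move: hz; rewrite negb_or.
  move/subset_leq_card; rewrite cards2 => h.
  move: h; case: (_ != _) => h; lia.
case/andP: hy => hy1 hyx.
have hxy : (x * y)^-1 != 1.
  rewrite eq_invg1; apply/negP => /eqP e; move/eqP: hyx; apply.
  by rewrite -(mulKg x y) e mulg1.
exists [:: x; y; (x * y)^-1]; split=> //; split.
- exists [:: x; y; (x*y)^-1] => //; by rewrite !big_cons big_nil mulg1 mulgA mulgV.
- by [].
- move=> V W hV hW hp.
  have hs := perm_size hp; rewrite size_cat /= in hs.
  have key : forall Z, inB Z -> size Z = 1%N -> {subset Z <= [:: x; y; (x*y)^-1]} -> False.
    move=> [|z [|? ?]] //= hZ _ sub; have := inB1 hZ => ez.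
    have := sub z; rewrite mem_seq1 eqxx ez => /(_ isT); rewrite !inE.
    by rewrite !(eq_sym 1) (negbTE hx) (negbTE hy1) (negbTE hxy).
  case: V hV hp hs => [|v V]; first by left.
  case: W hW => [|w W]; first by right.
  move=> hW hV hp hs; exfalso.
  case: V hV hp hs => [|v' V] hV hp hs.
  + apply: (key [:: v]) => // z; rewrite mem_seq1 => /eqP ->; by rewrite (perm_mem hp) inE eqxx.
  + case: W hW hp hs => [|w' W] hW hp hs /=; last by move: hs => /=; lia.
    apply: (key [:: w]) => // z; rewrite mem_seq1 => /eqP ->; by rewrite (perm_mem hp) mem_cat !inE eqxx !orbT.
Qed.


Definition Ecat n (g : 'I_n -> gT) A := catall (fun i => [:: g i]) A.
Definition Icat n (g : 'I_n -> gT) A := catall (fun i => [:: (g i)^-1]) A.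

Lemma map_inv_E n (g : 'I_n -> gT) A : map (fun z : gT => z^-1) (Ecat g A) = Icat g A.
Proof. by rewrite /Ecat /Icat /catall map_flatten -map_comp. Qed.
Lemma map_inv_I n (g : 'I_n -> gT) A : map (fun z : gT => z^-1) (Icat g A) = Ecat g A.
Proof.
rewrite /Ecat /Icat /catall map_flatten -map_comp; congr flatten; apply: eq_map => i /=.
by rewrite invgK.
Qed.

Lemma omega_lower U k : atomB U -> (2 < size U)%N ->
  (forall n (a : 'I_n -> seq gT), (forall i, inB (a i)) -> dvdB U (catall a setT) ->
     exists Om : {set 'I_n}, (#|Om| <= k)%N /\ dvdB U (catall a Om)) ->
  (size U <= k)%N.
Proof.
move=> hat hl hpred; have [hUB hUne hUat] := hat.
set g := fun i : 'I_(size U) => nth 1 U i.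
set a := fun i : 'I_(size U) => [:: g i; (g i)^-1].
have hU : Ecat g setT = U by exact: catall_nth.
have ha : forall A p, count p (catall a A) = (count p (Ecat g A) + count p (Icat g A))%N.
  move=> A p; rewrite /Ecat /Icat !count_catall -big_split; apply: eq_bigr => i _ /=.
  by rewrite !addn0.
have [Om [hk [c hc hp]]] : exists Om : {set 'I_(size U)}, (#|Om| <= k)%N /\ dvdB U (catall a Om).
  apply: hpred => [i|]; first exact: inB_pair.
  exists (Icat g setT); first by rewrite -map_inv_E hU; exact: inB_inv.
  apply/seq.permP => p; by rewrite ha count_cat hU.
have hcU : forall p A, count p U = (count p (Ecat g A) + count p (Ecat g (~: A)))%N.
  by move=> p A; rewrite /Ecat -count_split -/(Ecat g setT) hU.
have hsz : forall A, size (catall a A) = (#|A| * 2)%N.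
  by move=> A; rewrite size_catall (eq_bigr (fun _ => 2)) // sum_nat_const.
suff eO : Om = setT by move: hk; rewrite eO cardsT card_ord.
have h1 : perm_eq (Icat g Om) (Ecat g (~: Om) ++ c).
  apply/seq.permP => p; move/seq.permP: hp => /(_ p).
  by rewrite ha count_cat (hcU p Om) count_cat -addnA => /addnI.
have h2 : perm_eq (Ecat g Om) (Icat g (~: Om) ++ map (fun z : gT => z^-1) c).
  by rewrite -(map_inv_I g Om) -(map_inv_E g (~: Om)) -map_cat; exact: perm_map h1.
have h3 : perm_eq U (map (fun z : gT => z^-1) c ++ catall a (~: Om)).
  apply/seq.permP => p; move/seq.permP: h2 => /(_ p).
  rewrite !count_cat ha (hcU p Om) => e.
  by rewrite e addnC addnA [RHS]addnC.
have hW : inB (catall a (~: Om)) by apply: inB_catall => i; exact: inB_pair.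
case: (hUat _ _ (inB_inv hc) hW h3) => e.
  exfalso; rewrite e /= in h3.
  have := perm_size h3; rewrite hsz => hs.
  have h5 : (2 < #|~: Om| * 2)%N by rewrite -hs.
  have hj : (1 < #|~: Om|)%N by lia.
  have [j hjin] : exists j, j \in ~: Om by apply/card_gt0P; lia.
  move: hj; rewrite (cardsD1 j) hjin add1n ltnS => hj.
  have h4 : perm_eq (catall a (~: Om)) (a j ++ catall a (~: Om :\ j)).
    apply/seq.permP => p; by rewrite count_cat !count_catall (big_setD1 _ hjin).
  case: (hUat _ _ (inB_pair (g j)) (inB_catall _ (fun i => inB_pair (g i))) (perm_trans h3 h4)) => //.
  move/(f_equal size)/eqP; rewrite hsz /= muln_eq0 orbF => /eqP h6; by rewrite h6 in hj.
apply/setP => i; rewrite inE; apply/negPn/negP => hi.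
have := f_equal size e; rewrite hsz.
by rewrite (cardsD1 i) inE hi.
Qed.

Lemma sub_catall (U : seq gT) n (a : 'I_n -> seq gT) :
  (forall y, count_mem y U <= count_mem y (catall a setT))%N ->
  exists Om : {set 'I_n}, (#|Om| <= size U)%N /\
     forall y, (count_mem y U <= count_mem y (catall a Om))%N.
Proof.
elim: U => [|x U IH] hsub.
  by exists set0; rewrite cards0; split=> // y.
have [Om' [hc hs]] := IH (fun y => leq_trans (leq_addl _ _) (hsub y)).
case: (ltnP (count_mem x U) (count_mem x (catall a Om'))) => hlt.
  exists Om'; split; first exact: leqW.
  move=> y /=; have [<-|ne] := eqVneq x y; first by rewrite add1n.
  by rewrite add0n; exact: hs.
have hx := hsub x; rewrite /= eqxx add1n (count_split _ Om') in hx.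
have [j hj hpos] : exists2 j, j \in ~: Om' & (0 < count_mem x (a j))%N.
  apply: NNPP => H.
  have h0 : (\sum_(i in ~: Om') count_mem x (a i) = 0)%N.
    apply: big1 => i hi; apply/eqP; rewrite -leqn0 leqNgt; apply/negP => h; apply: H; by exists i.
  move: hx; rewrite [count _ (catall a (~: Om'))]count_catall h0 addn0 => hx.
  by move: (leq_ltn_trans hlt hx); rewrite ltnn.
have hjn : j \notin Om' by rewrite inE in hj.
exists (j |: Om'); split; first by rewrite cardsU1 hjn /= add1n ltnS.
move=> y; rewrite count_catall big_setU1 // -count_catall /=.
have [<-|ne] := eqVneq x y; last by rewrite add0n; apply: leq_trans (hs y) (leq_addl _ _).
apply: (@leq_trans (1 + count_mem x (catall a Om'))); first by rewrite !add1n ltnS.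
by rewrite leq_add2r.
Qed.

Lemma subR (U L : seq gT) : (forall y, count_mem y U <= count_mem y L)%N ->
  exists R, perm_eq L (U ++ R).
Proof.
elim: U L => [|x U IH] L hsub; first by exists L.
have hxL : x \in L by rewrite -has_pred1 has_count; apply: leq_trans (hsub x); rewrite /= eqxx.
have hp := perm_to_rem hxL.
have [R hR] : exists R, perm_eq (rem x L) (U ++ R).
  apply: IH => y; have := hsub y; move/seq.permP: hp => /(_ (pred1 y)) -> /=.
  by rewrite leq_add2l.
by exists R; apply: perm_trans hp _; rewrite /= perm_cons.
Qed.

Lemma count_mask_cat n (a : 'I_n -> seq gT) (B A : {set 'I_n}) (p : pred gT) :
  count p (catall (fun i => if i \in B then [::] else a i) A) = count p (catall a (A :\: B)).
Proof.
rewrite !count_catall (big_setID B) /= big1 ?add0n; last first.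
  by move=> i; rewrite inE => /andP [_ ->].
by apply: eq_bigr => i; rewrite inE => /andP [/negbTE -> _].
Qed.

Lemma omega_upper U D d : atomB U -> (size U <= D)%N ->
  (forall n (S : 'I_n -> seq gT), exists Om : {set 'I_n}, (#|Om| <= d)%N /\ simB (catall S setT) (catall S Om)) ->
  forall n (a : 'I_n -> seq gT), (forall i, inB (a i)) -> dvdB U (catall a setT) ->
     exists Om : {set 'I_n}, (#|Om| <= D + d)%N /\ dvdB U (catall a Om).
Proof.
move=> hat hD hd n a ha [c hc hp].
move/seq.permP: hp => hp.
have hsub : forall y, (count_mem y U <= count_mem y (catall a setT))%N.
  by move=> y; rewrite hp count_cat leq_addr.
have [Om1 [h1 h2]] := sub_catall hsub.
have [R hR] := subR h2.
set b := fun i => if i \in Om1 then [::] else a i.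
have [Om3 [h3 hsim]] := hd n b.
have hcb : perm_eq c (R ++ catall b setT).
  apply/seq.permP => p; move/seq.permP: hR => /(_ p) e2.
  have e1 := hp p; rewrite (count_split _ Om1) e2 !count_cat in e1.
  rewrite count_cat count_mask_cat setTD; apply/esym.
  by move: e1; rewrite -addnA => /addnI.
have hB : inB (catall b Om3 ++ R).
  apply/(hsim R); apply: inB_perm hc; apply: perm_trans hcb _; by rewrite perm_catC.
exists (Om1 :|: Om3); split.
  rewrite cardsU; apply: leq_trans (leq_subr _ _) _; exact: leq_add (leq_trans h1 hD) h3.
exists (R ++ catall b Om3); first by apply: inB_perm hB; rewrite perm_catC.
apply/seq.permP => p; move/seq.permP: hR => /(_ p) e2.
rewrite count_catall (big_setID Om1) /= setUK setDUl setDv set0U -!count_catall e2.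
by rewrite !count_cat count_mask_cat addnA.
Qed.

End Gen.

Section Ab.
Variable K : finGroupType.
Local Open Scope group_scope.
Hypothesis hK : forall x y : K, commute x y.

Lemma prod_perm (s t : seq K) : perm_eq s t -> \prod_(x <- s) x = \prod_(x <- t) x.
Proof.
elim: s t => [|x s IH] t hp.
  by have := perm_size hp; case: t hp => //.
have hx : x \in t by rewrite -(perm_mem hp) inE eqxx.
case/splitPr: hx hp => t1 t2 hp.
have hp' : perm_eq s (t1 ++ t2).
  by rewrite -(perm_cons x); apply: perm_trans hp _; rewrite -cat1s perm_catCA.
rewrite big_cons (IH _ hp') !big_cat big_cons /= !mulgA; congr (_ * _); exact: hK.
Qed.

Lemma inBK (s : seq K) : inB s <-> \prod_(x <- s) x = 1.
Proof.
split; first by move=> [t pt Pt]; rewrite -(prod_perm pt).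
by move=> h; exists s.
Qed.
End Ab.

Section Ab2.
Variable K : finGroupType.
Local Open Scope group_scope.
Hypothesis hK : forall x y : K, commute x y.

Lemma atom_le_card (A : seq K) : atomB A -> (size A <= #|K|)%N.
Proof.
move=> [hAB hne hat]; rewrite leqNgt; apply/negP => hlt.
set f := fun k => \prod_(y <- take k A) y.
set s := [seq f k | k <- iota 0 (size A)].
have hs : size s = size A by rewrite size_map size_iota.
have : ~~ uniq s.
  apply/negP => hu; move/card_uniqP: hu => hu.
  have := max_card (mem s); rewrite hu hs => h; by move: (leq_trans hlt h); rewrite ltnn.
case/(uniqPn 1) => i [j [hij hj heq]].
rewrite hs in hj; have hi : (i < size A)%N by apply: ltn_trans hij hj.
rewrite /s !(nth_map 0) ?size_iota // !nth_iota // !add0n /f in heq.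
have hj' : j = (i + (j - i))%N by rewrite subnKC // ltnW.
set V := take (j - i) (drop i A).
set W := take i A ++ drop j A.
have hA : A = take i A ++ V ++ drop j A.
  by rewrite /V catA -takeD -hj' -{1}(cat_take_drop j A).
have hV1 : \prod_(y <- V) y = 1.
  move: heq; rewrite hj' takeD big_cat /= -/V => /esym.
  by rewrite -{2}(mulg1 (\prod_(y <- take i A) y)) => /mulgI.
have hW1 : \prod_(y <- W) y = 1.
  move/inBK: hAB => /(_ hK); rewrite {1}hA !big_cat /= hV1 mul1g => h.
  by rewrite /W; exact: h.
have hVB : inB V by apply/(inBK hK).
have hWB : inB W by apply/(inBK hK).
have hpA : perm_eq A (V ++ W) by rewrite {1}hA /W perm_catCA.
case: (hat V W hVB hWB hpA).
- move=> e; have : (0 < size V)%N.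
    rewrite /V size_take size_drop; case: ifP => _; lia.
  by rewrite e.
- move=> e; have : (0 < size W)%N.
    rewrite /W size_cat size_drop; lia.
  by rewrite e.
Qed.
End Ab2.

Section Quo.
Variable gT : finGroupType.
Local Open Scope group_scope.
Local Notation H := [~: [set: gT], [set: gT]].
Local Notation K := (coset_of H).

Lemma inN (x : gT) : x \in 'N(H).
Proof.
have := der_normal 1 [set: gT]%G; rewrite derg1 => /normal_norm /subsetP; apply.
by rewrite inE.
Qed.

Lemma Kab (x y : K) : commute x y.
Proof.
have := der_abelian 0 [set: gT]%G; rewrite derg0 derg1 quotientT => /centsP h.
by apply: h; rewrite inE.
Qed.

Lemma phi_prod (s : seq gT) : coset H (\prod_(x <- s) x) = \prod_(x <- map (coset H) s) x.
Proof.
elim: s => [|x s IH]; first by rewrite !big_nil coset_id.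
by rewrite /= !big_cons coset_morphM ?inN // IH.
Qed.

Lemma inB_coset (s : seq gT) : inB s -> inB (map (coset H) s).
Proof.
move=> [t pt Pt]; exists (map (coset H) t); first exact: perm_map.
by rewrite -phi_prod Pt coset_id.
Qed.

Lemma coset_inv (x : gT) : coset H x^-1 = (coset H x)^-1.
Proof.
by rewrite morphV ?inN.
Qed.
Lemma map_catall (T : finGroupType) (f : gT -> T) n (S : 'I_n -> seq gT) A :
  map f (catall S A) = catall (fun i => map f (S i)) A.
Proof. by rewrite /catall map_flatten -map_comp. Qed.

Lemma bigD_bound l : ((1 <= l)%N /\ forall n, (l <= n)%N -> forall S : 'I_n -> seq gT,
     exists2 Om : {set 'I_n}, Om \proper setT & simB (catall S setT) (catall S Om)) ->
  forall A : seq K, atomB A -> (size A <= l)%N.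
Proof.
move=> [hl hP] A [hAB hAne hAat]; rewrite leqNgt; apply/negP => hlt.
case: A hAB hAne hAat hlt => [|x A'] // hAB _ hAat hlt.
have hn : (l <= size A')%N by [].
set c := fun i : 'I_(size A') => nth 1 A' i.
set S := fun i : 'I_(size A') => [:: repr (c i)].
have [Om hprop hsim] := hP _ hn S.
set p := \prod_(y <- catall S setT) y.
have h1 : inB (catall S setT ++ [:: p^-1]).
  exists (catall S setT ++ [:: p^-1]); first exact: perm_refl.
  by rewrite big_cat big_seq1 /= mulgV.
have h2 := inB_coset ((hsim [:: p^-1]).1 h1).
have hmap : forall B, map (coset H) (catall S B) = Ecat c B.
  move=> B; rewrite map_catall /Ecat /catall; congr flatten; apply: eq_map => i /=.
  by rewrite coset_reprK.
have hcp : coset H p = \prod_(y <- A') y.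
  by rewrite phi_prod hmap /Ecat catall_nth.
rewrite map_cat hmap /= coset_inv hcp in h2.
move/(inBK Kab): h2; rewrite big_cat big_seq1 => /eqP; rewrite -eq_mulgV1 => /eqP hOm.
have hsplit : perm_eq A' (Ecat c Om ++ Ecat c (~: Om)).
  apply/seq.permP => q; by rewrite count_cat -(count_split _ Om) /Ecat catall_nth.
have hc1 : \prod_(y <- Ecat c (~: Om)) y = 1.
  move: hOm; rewrite (prod_perm Kab hsplit) big_cat /=.
  by rewrite -{1}(mulg1 (\prod_(y <- Ecat c Om) y)) => /mulgI <-.
have hx1 : \prod_(y <- x :: Ecat c Om) y = 1.
  move/(inBK Kab): hAB; by rewrite !big_cons hOm.
case: (hAat (Ecat c (~: Om)) (x :: Ecat c Om)).
- exact/(inBK Kab).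
- exact/(inBK Kab).
- apply/seq.permP => q; move/seq.permP: hsplit => /(_ q).
  rewrite /= !count_cat /= => ->; by rewrite addnA [LHS]addnC.
- move/(f_equal size); rewrite /Ecat size_catall (eq_bigr (fun _ => 1%N)) // sum_nat_const muln1.
  move/cards0_eq => e; move: hprop; rewrite properT; apply/negP; rewrite negbK.
  by rewrite -(setCK Om) e setC0.
- by [].
Qed.

Lemma sub_idx (T : finGroupType) n (c : 'I_n -> T) (V : seq T) :
  (forall z, count_mem z V <= count_mem z (Ecat c setT))%N -> exists Om, perm_eq (Ecat c Om) V.
Proof.
elim: V => [|v V IH] hsub.
  by exists set0; rewrite /Ecat /catall enum_set0.
have [Om' hOm'] := IH (fun z => leq_trans (leq_addl _ _) (hsub z)).
have hv := hsub v; rewrite /= eqxx add1n /Ecat (count_split _ Om') in hv.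
rewrite -/(Ecat c Om') (seq.permP hOm') in hv.
have [j hj hpos] : exists2 j, j \in ~: Om' & (0 < count_mem v [:: c j])%N.
  apply: NNPP => H0.
  have h0 : (\sum_(i in ~: Om') count_mem v [:: c i] = 0)%N.
    apply: big1 => i hi; apply/eqP; rewrite -leqn0 leqNgt; apply/negP => h; apply: H0; by exists i.
  move: hv; rewrite count_catall h0 addn0 ltnn //.
have hjn : j \notin Om' by rewrite inE in hj.
move: hpos; rewrite /= addn0 lt0b => /eqP hcj.
exists (j |: Om'); apply/seq.permP => q.
rewrite /Ecat count_catall big_setU1 // -count_catall -/(Ecat c Om') (seq.permP hOm') /= hcj.
by rewrite addn0.
Qed.

Lemma prod_flat (T : finGroupType) n (S : 'I_n -> seq T) A :
  \prod_(y <- catall S A) y = \prod_(i <- enum A) \prod_(y <- S i) y.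
Proof.
rewrite /catall; elim: (enum A) => [|i r IH]; first by rewrite !big_nil.
by rewrite /= big_cat big_cons IH.
Qed.

Lemma coset_bigprod (I : Type) (r : seq I) (F : I -> gT) :
  coset H (\prod_(i <- r) F i) = \prod_(i <- r) coset H (F i).
Proof.
elim: r => [|i r IH]; first by rewrite !big_nil coset_id.
by rewrite !big_cons coset_morphM ?inN // IH.
Qed.

Lemma bigD_pred (hab : abelian [set: gT]) d :
  (forall A : seq K, atomB A -> (size A <= d)%N) ->
  (1 <= d)%N /\ forall n, (d <= n)%N -> forall S : 'I_n -> seq gT,
     exists2 Om : {set 'I_n}, Om \proper setT & simB (catall S setT) (catall S Om).
Proof.
move=> hd; split.
  apply: (hd [:: 1]); split.
  - by exists [:: 1]; [exact: perm_refl | rewrite big_seq1].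
  - by [].
  - move=> V W _ _ /perm_size; rewrite size_cat.
    case: V => [|? V]; first by left.
    case: W => [|? W]; first by right.
    move=> /= e; lia.
move=> n hn S.
have hGab : forall x y : gT, commute x y.
  move=> x y; apply: (centsP hab); by rewrite inE.
set x := fun i => \prod_(y <- S i) y.
set c := fun i => coset H (x i).
set y0 := (\prod_(z <- Ecat c setT) z)^-1.
have hs : inB (y0 :: Ecat c setT) by apply/(inBK Kab); rewrite big_cons mulVg.
have hsz : size (y0 :: Ecat c setT) = n.+1.
  by rewrite /= /Ecat size_catall (eq_bigr (fun _ => 1%N)) // sum_nat_const muln1 cardsT card_ord.
have hna : ~ atomB (y0 :: Ecat c setT).
  by move/hd; rewrite hsz => h; move: (leq_trans h hn); rewrite ltnn.
have hne0 : y0 :: Ecat c setT <> [::] by [].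
have [V [W [hV hW hp hVne hWne]]] := not_atom hs hne0 hna.
have key : forall V W, inB V -> inB W -> perm_eq (y0 :: Ecat c setT) (V ++ W) -> V <> [::] ->
    y0 \in W -> exists Om' : {set 'I_n}, Om' != set0 /\ \prod_(z <- Ecat c Om') z = 1.
  move=> V1 W1 hV1 hW1 hp1 hV1ne hyW.
  have hsub : forall z, (count_mem z V1 <= count_mem z (Ecat c setT))%N.
    move=> z; have := seq.permP hp1 (pred1 z); rewrite /= count_cat => e.
    have [ez|ne] := eqVneq y0 z.
      have : (0 < count_mem z W1)%N by rewrite -has_count has_pred1 -ez.
      move: e; rewrite ez eqxx add1n => e h; by rewrite -ltnS e -[X in (X < _)%N]addn0 ltn_add2l.
    move: e; rewrite (negbTE ne) add0n => e; by rewrite e leq_addr.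
  have [Om' hOm'] := sub_idx hsub.
  exists Om'; split.
    apply/negP => /eqP e0; move: hOm'; rewrite e0 /Ecat /catall enum_set0 /= => /perm_size.
    by case: V1 hV1ne {hV1 hp1 hsub}.
  rewrite (prod_perm Kab hOm'); exact/(inBK Kab).
have [Om' [hOmne hOm1]] : exists Om' : {set 'I_n}, Om' != set0 /\ \prod_(z <- Ecat c Om') z = 1.
  have : y0 \in V ++ W by rewrite -(perm_mem hp) inE eqxx.
  rewrite mem_cat => /orP [hyV|hyW]; last exact: key hV hW hp hVne hyW.
  apply: key hW hV _ hWne hyV; apply: perm_trans hp _; by rewrite perm_catC.
have hprod : \prod_(y <- catall S Om') y = 1.
  have e1 : \prod_(z <- Ecat c Om') z = coset H (\prod_(y <- catall S Om') y).
    rewrite !prod_flat coset_bigprod; apply: eq_bigr => i _; by rewrite big_seq1.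
  have : coset H (\prod_(y <- catall S Om') y) = 1 by rewrite -e1.
  move/(coset_idr (inN _)) => hin.
  have hin' : (\prod_(y <- catall S Om') y) \in [~: [set: gT], [set: gT]] := hin.
  by move: hin'; rewrite (commG1P hab) inE => /eqP.
exists (~: Om').
  rewrite properT; apply/negP => /eqP e; move/negP: hOmne; apply.
  by rewrite -(setCK Om') e setCT.
move=> T; rewrite !(inBK hGab) !big_cat /=.
have -> : \prod_(y <- catall S setT) y = \prod_(y <- catall S (~: Om')) y.
  have hpp : perm_eq (catall S setT) (catall S Om' ++ catall S (~: Om')).
    by apply/seq.permP => q; rewrite count_cat -count_split.
  by rewrite (prod_perm hGab hpp) big_cat /= hprod mul1g.
by [].
Qed.

End Quo.

Theorem proposition5p12 (gT : finGroupType) (hG : (3 <= #|[set: gT]|)%N) :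
  (le_enat (Davenport gT) (omegaG gT) /\
   le_enat (omegaG gT) (add_enat (Davenport gT) (small_d_C gT))) /\
  (le_enat (Davenport (coset_of [~: [set: gT], [set: gT]]%g)) (big_D_C gT) /\
   (abelian [set: gT] ->
    Davenport (coset_of [~: [set: gT], [set: gT]]%g) = big_D_C gT)).
Proof.
split; [split|split].
- case hO: (omegaG gT) => [N|]; last by case: (Davenport gT).
  have hsp := infN_spec hO.
  have hsize : forall U : seq gT, atomB U -> (2 < size U)%N -> (size U <= N)%N.
    move=> U hU hl; have := hsp U hU; case hE: (omega_elt U) => [k|] //= hk.
    exact: leq_trans (omega_lower hU hl (infN_spec hE)) hk.
  have [U3 [hU3 hs3]] := atom3 hG.
  have h3N := hsize U3 hU3 (ltac:(by rewrite hs3)).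
  have hP : forall U : seq gT, atomB U -> (size U <= N)%N.
    move=> U hU; case: (ltnP 2 (size U)) => h; first exact: hsize.
    rewrite hs3 in h3N; exact: leq_trans h (ltnW h3N).
  have [m [hm [hmN _]]] := infN_some (P := fun n => forall U : seq gT, atomB U -> (size U <= n)%N) hP.
  by have -> : Davenport gT = Some m := hm.
- case hD: (Davenport gT) => [D|]; last by case: (omegaG gT).
  case hd: (small_d_C gT) => [d|]; last by case: (omegaG gT).
  have hDs := infN_spec hD; have hds := infN_spec hd.
  have hOm : forall u : seq gT, atomB u -> le_enat (omega_elt u) (Some (D + d)).
    move=> u hu.
    have [k [hk [hkD _]]] := infN_some (P := fun N => forall n (a : 'I_n -> seq gT),
          (forall i, inB (a i)) -> dvdB u (catall a setT) ->
          exists Om : {set 'I_n}, (#|Om| <= N)%N /\ dvdB u (catall a Om))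
        (omega_upper hu (hDs u hu) hds).
    by have -> : omega_elt u = Some k := hk.
  have [m [hm [hmN _]]] := infN_some (P := fun N => forall u : seq gT, atomB u -> le_enat (omega_elt u) (Some N)) hOm.
  by have -> : omegaG gT = Some m := hm.
- case hB: (big_D_C gT) => [l|]; last by case: (Davenport _).
  have hl := infN_spec hB.
  have [m [hm [hml _]]] := infN_some (P := fun n => forall U : seq (coset_of [~: [set: gT], [set: gT]]), atomB U -> (size U <= n)%N) (bigD_bound hl).
  by have -> : Davenport (coset_of [~: [set: gT], [set: gT]]) = Some m := hm.
- move=> hab.
  have hfin := @atom_le_card _ (@Kab gT).
  have [d [hdm [_ hdP]]] := infN_some (P := fun n => forall U : seq (coset_of [~: [set: gT], [set: gT]]), atomB U -> (size U <= n)%N) hfin.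
  have hbig := bigD_pred hab hdP.
  have [b [hb [hbd _]]] := infN_some (P := fun l => (1 <= l)%N /\
          forall n, (l <= n)%N -> forall S : 'I_n -> seq gT,
          exists2 Om : {set 'I_n}, Om \proper setT & simB (catall S setT) (catall S Om)) hbig.
  have [m [hm [hmb _]]] := infN_some (P := fun n => forall U : seq (coset_of [~: [set: gT], [set: gT]]), atomB U -> (size U <= n)%N) (bigD_bound (infN_spec hb)).
  have e1 : Some d = Some m by rewrite -hdm -hm.
  case: e1 => e1; subst m.
  have -> : Davenport (coset_of [~: [set: gT], [set: gT]]) = Some d := hdm.
  have -> : big_D_C gT = Some b := hb.
  by congr Some; apply/eqP; rewrite eqn_leq hbd hmb.
Qed.
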